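(* Let $D_{28}$ be the $28\times 28$ integer matrix $\begin{pmatrix} A & B\\ -B^T & A^T\end{pmatrix}$, where $A$ and $B$ are $14\times 14$ negacirculant matrices with first rows $r_A=(0,1,2,0,0,0,0,0,0,0,0,0,2,1)$ and $r_B=(-1,0,1,-1,0,2,-1,2,0,1,1,0,-1,2)$. (This matrix satisfies $D_{28}D_{28}^T=29I$ and $D_{28}^T=-D_{28}$.) Let $C_5(D_{28})$ be the $\mathbb{Z}_5$-code of length $56$ with generator matrix $(I\ \ D_{28})$, entries read modulo $5$. Then $A_5(C_5(D_{28}))$ contains a $k$-frame for every positive integer $k\ge 5$ that is not of the form $2^{m_1}3^{m_2}7^{m_3}17^{m_4}23^{m_5}$ with $m_1,\dots,m_5$ non-negative integers.
   Context: An $N\times N$ negacirculant matrix with first row $(r_0,\dots,r_{N-1})$ is the matrix whose $(i,j)$ entry ($0\le i,j\le N-1$) is $r_{j-i}$ if $j\ge i$ and $-r_{N+j-i}$ if $j<i$. Construction A: with $\rho:\mathbb{Z}_k\to\mathbb{Z}$ sending $0,1,\dots,k-1$ to $0,1,\dots,k-1$, for a $\mathbb{Z}_k$-code $C$ of length $N$ set $A_k(C)=\frac{1}{\sqrt{k}}\{\rho(C)+k\mathbb{Z}^N\}$. A $t$-frame of a lattice in dimension $N$ is a set of $N$ lattice vectors $f_1,\dots,f_N$ with $(f_i,f_j)=t\,\delta_{i,j}$. *)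

(* Defs.v *)
From HB Require Import structures.
From mathcomp Require Import all_boot all_order all_algebra.
Set Implicit Arguments. Unset Strict Implicit. Unset Printing Implicit Defensive.
Import Order.TTheory GRing.Theory Num.Theory.
Local Open Scope ring_scope.

Definition negacirculant (N : nat) (r : seq int) : 'M[int]_N :=
  \matrix_(i < N, j < N)
    if (i <= j)%N then r`_(j - i) else - r`_(N + j - i).

Definition rA : seq int := [:: 0; 1; 2; 0; 0; 0; 0; 0; 0; 0; 0; 0; 2; 1].
Definition rB : seq int :=
  [:: -1; 0; 1; -1; 0; 2; -1; 2; 0; 1; 1; 0; -1; 2].

Definition A14 : 'M[int]_14 := negacirculant 14 rA.
Definition B14 : 'M[int]_14 := negacirculant 14 rB.

Definition D28 : 'M[int]_(14 + 14) := block_mx A14 B14 (- B14^T) A14^T.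

Definition red (k : nat) (z : int) : 'Z_k := z%:~R.

Definition gen5 : 'M['Z_5]_(14 + 14, (14 + 14) + (14 + 14)) :=
  row_mx 1%:M (map_mx (red 5) D28).

Definition code_of (k m n : nat) (G : 'M['Z_k]_(m, n)) : 'rV['Z_k]_n -> Prop :=
  fun c => exists u : 'rV['Z_k]_m, c = u *m G.

Definition C5D28 := code_of gen5.

Definition rho (k : nat) (a : 'Z_k) : int := (nat_of_ord a)%:Z.

(* Construction A: A_k(C) = 1/sqrt(k) (rho(C) + k Z^n).
   A vector of A_k(C) is represented by y in Z^n (the lattice vector is
   y / sqrt k); membership means y is in rho(C) + k Z^n. *)
Definition inAk (k n : nat) (C : 'rV['Z_k]_n -> Prop) (y : 'rV[int]_n) : Prop :=
  exists c, C c /\ exists z : 'rV[int]_n, y = map_mx (@rho k) c + k%:Z *: z.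

(* inner product of the lattice vectors y/sqrt k and y'/sqrt k, times k *)
Definition dotZ (n : nat) (y y' : 'rV[int]_n) : int := (y *m y'^T) 0 0.

Definition has_frame (k n : nat) (C : 'rV['Z_k]_n -> Prop) (t : nat) : Prop :=
  exists f : 'I_n -> 'rV[int]_n,
    (forall i, inAk C (f i)) /\
    (forall i j, dotZ (f i) (f j) = if i == j then (k * t)%:Z else 0).

(* Main.v *)
Require Import Defs.
From Stdlib Require Import ZArith Lia Arith Wf_nat.

Local Open Scope Z_scope.

Definition s4 (a b c d : Z) := a*a + b*b + c*c + d*d.

Lemma euler (a1 a2 a3 a4 b1 b2 b3 b4 : Z) :
  s4 a1 a2 a3 a4 * s4 b1 b2 b3 b4 =
  s4 (a1*b1 + a2*b2 + a3*b3 + a4*b4) (a1*b2 - a2*b1 + a3*b4 - a4*b3)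
     (a1*b3 - a3*b1 + a4*b2 - a2*b4) (a1*b4 - a4*b1 + a2*b3 - a3*b2).
Proof. unfold s4; ring. Qed.

Lemma pair_half (a b c d M : Z) :
  2 * M = s4 a b c d -> Z.even (a - b) = true -> Z.even (c - d) = true ->
  exists u v w z, M = s4 u v w z.
Proof.
intros H Hab Hcd.
apply Z.even_spec in Hab; apply Z.even_spec in Hcd.
destruct Hab as [k Hk]; destruct Hcd as [l Hl].
exists (b + k), k, (d + l), l.
unfold s4 in *.
assert (a = b + 2*k) by lia. assert (c = d + 2*l) by lia. subst a c.
nia.
Qed.

Lemma even_sq (a : Z) : Z.even (a * a) = Z.even a.
Proof. rewrite Z.even_mul. destruct (Z.even a); reflexivity. Qed.

Lemma even_case (a b c d M : Z) :
  2 * M = s4 a b c d -> exists u v w z, M = s4 u v w z.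
Proof.
intro H.
assert (He : Z.even (s4 a b c d) = true).
{ rewrite <- H. rewrite Z.even_mul. reflexivity. }
unfold s4 in He. rewrite !Z.even_add, !even_sq in He.
assert (Ev : forall x y, Z.even (x - y) = Bool.eqb (Z.even x) (Z.even y)).
{ intros x y. rewrite Z.even_sub. destruct (Z.even x), (Z.even y); reflexivity. }
destruct (Z.even a) eqn:Ea, (Z.even b) eqn:Eb, (Z.even c) eqn:Ec, (Z.even d) eqn:Ed;
  simpl in He; try discriminate.
all: first
  [ apply (pair_half a b c d M H); rewrite Ev; [rewrite Ea, Eb | rewrite Ec, Ed]; reflexivity
  | apply (pair_half a c b d M); [unfold s4 in *; lia | rewrite Ev, Ea, Ec; reflexivity
                                  | rewrite Ev, Eb, Ed; reflexivity]
  | apply (pair_half a d b c M); [unfold s4 in *; lia | rewrite Ev, Ea, Ed; reflexivity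
                                  | rewrite Ev, Eb, Ec; reflexivity] ].
Qed.


Lemma red_bound (a m h : Z) : m = 2*h+1 -> 0 < h ->
  -h <= a - m * ((a + h) / m) <= h.
Proof.
intros Hm Hh.
assert (Hpos : 0 < m) by lia.
pose proof (Z.div_mod (a + h) m ltac:(lia)) as E.
pose proof (Z.mod_pos_bound (a + h) m Hpos) as B.
lia.
Qed.

Lemma odd_step (p m a1 a2 a3 a4 : Z) : 1 < m < p -> Z.odd m = true ->
  m * p = s4 a1 a2 a3 a4 -> (forall d, 1 < d < p -> ~ (d | p)) ->
  exists r, 0 < r < m /\ exists u v w z, r * p = s4 u v w z.
Proof.
intros Hm Hodd H Hpr.
apply Z.odd_spec in Hodd. destruct Hodd as [h Hh].
assert (Hh0 : 0 < h) by lia.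
set (k1 := (a1 + h) / m). set (k2 := (a2 + h) / m).
set (k3 := (a3 + h) / m). set (k4 := (a4 + h) / m).
pose proof (red_bound a1 m h Hh Hh0) as B1. fold k1 in B1.
pose proof (red_bound a2 m h Hh Hh0) as B2. fold k2 in B2.
pose proof (red_bound a3 m h Hh Hh0) as B3. fold k3 in B3.
pose proof (red_bound a4 m h Hh Hh0) as B4. fold k4 in B4.
set (b1 := a1 - m * k1) in *. set (b2 := a2 - m * k2) in *.
set (b3 := a3 - m * k3) in *. set (b4 := a4 - m * k4) in *.
set (r := p - 2*(a1*k1 + a2*k2 + a3*k3 + a4*k4) + m*(k1*k1 + k2*k2 + k3*k3 + k4*k4)).
assert (Eb : s4 b1 b2 b3 b4 = m * r).
{ assert (E : s4 b1 b2 b3 b4 - m * r = s4 a1 a2 a3 a4 - m * p).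
  { unfold s4, b1, b2, b3, b4, r. ring. }
  lia. }
assert (Sq1 : b1 * b1 <= h * h) by nia.
assert (Sq2 : b2 * b2 <= h * h) by nia.
assert (Sq3 : b3 * b3 <= h * h) by nia.
assert (Sq4 : b4 * b4 <= h * h) by nia.
assert (P1 : 0 <= b1 * b1) by nia. assert (P2 : 0 <= b2 * b2) by nia.
assert (P3 : 0 <= b3 * b3) by nia. assert (P4 : 0 <= b4 * b4) by nia.
assert (Mm : m * m = 4 * (h * h) + 4 * h + 1) by (rewrite Hh; ring).
assert (Hr1 : m * r < m * m) by (unfold s4 in Eb; lia).
assert (Hr2 : 0 <= m * r) by (unfold s4 in Eb; lia).
assert (Hrm : r < m).
{ destruct (Z.lt_ge_cases r m) as [?|Hc]; [assumption|].
  exfalso. assert (m * m <= m * r) by (apply Z.mul_le_mono_nonneg_l; lia). lia. }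
assert (Hr0 : 0 <= r).
{ destruct (Z.lt_ge_cases r 0) as [Hc|?]; [|assumption].
  exfalso. assert (m * r < m * 0) by (apply Z.mul_lt_mono_pos_l; lia). lia. }
destruct (Z.eq_dec r 0) as [Hz | Hnz].
- exfalso.
  rewrite Hz in Eb. unfold s4 in Eb.
  assert (Z1 : b1 = 0) by nia. assert (Z2 : b2 = 0) by nia.
  assert (Z3 : b3 = 0) by nia. assert (Z4 : b4 = 0) by nia.
  assert (A1 : a1 = m * k1) by (unfold b1 in Z1; lia).
  assert (A2 : a2 = m * k2) by (unfold b2 in Z2; lia).
  assert (A3 : a3 = m * k3) by (unfold b3 in Z3; lia).
  assert (A4 : a4 = m * k4) by (unfold b4 in Z4; lia).
  apply (Hpr m); [lia |].
  exists (k1*k1 + k2*k2 + k3*k3 + k4*k4).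
  assert (Ea : m * p = m * ((k1*k1 + k2*k2 + k3*k3 + k4*k4) * m)).
  { rewrite H. unfold s4. rewrite A1, A2, A3, A4. ring. }
  apply Z.mul_reg_l in Ea; [exact Ea | lia].
- exists r. split; [lia |].
  set (q1 := p - (a1*k1 + a2*k2 + a3*k3 + a4*k4)).
  set (q2 := a2*k1 - a1*k2 + a4*k3 - a3*k4).
  set (q3 := a3*k1 - a1*k3 + a2*k4 - a4*k2).
  set (q4 := a4*k1 - a1*k4 + a3*k2 - a2*k3).
  exists q1, q2, q3, q4.
  pose proof (euler a1 a2 a3 a4 b1 b2 b3 b4) as Eu.
  assert (C1 : a1*b1 + a2*b2 + a3*b3 + a4*b4 = m * q1).
  { assert (E : a1*b1 + a2*b2 + a3*b3 + a4*b4 - m * q1 = s4 a1 a2 a3 a4 - m * p).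
    { unfold s4, b1, b2, b3, b4, q1. ring. }
    lia. }
  assert (C2 : a1*b2 - a2*b1 + a3*b4 - a4*b3 = m * q2) by (unfold b1, b2, b3, b4, q2; ring).
  assert (C3 : a1*b3 - a3*b1 + a4*b2 - a2*b4 = m * q3) by (unfold b1, b2, b3, b4, q3; ring).
  assert (C4 : a1*b4 - a4*b1 + a2*b3 - a3*b2 = m * q4) by (unfold b1, b2, b3, b4, q4; ring).
  rewrite C1, C2, C3, C4, <- H, Eb in Eu.
  assert (E2 : (m * m) * (r * p) = (m * m) * s4 q1 q2 q3 q4).
  { transitivity (m * p * (m * r)); [ring | rewrite Eu; unfold s4; ring]. }
  apply Z.mul_reg_l in E2; [exact E2 | nia].
Qed.


Lemma descent (p : Z) : 2 < p -> (forall d, 1 < d < p -> ~ (d | p)) ->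
  forall n : nat, forall m, m = Z.of_nat n -> 1 <= m < p ->
  (exists a b c d, m * p = s4 a b c d) -> exists a b c d, p = s4 a b c d.
Proof.
intros Hp Hpr n.
induction n as [n IH] using (well_founded_induction lt_wf).
intros m Hmn Hm [a [b [c [d H]]]].
destruct (Z.eq_dec m 1) as [E1 | N1].
{ exists a, b, c, d. rewrite <- H, E1. ring. }
destruct (Z.even m) eqn:Ev.
- apply Z.even_spec in Ev. destruct Ev as [j Hj].
  destruct (even_case a b c d (j * p)) as [u [v [w [z Hz]]]].
  { rewrite <- H, Hj. ring. }
  apply (IH (Z.to_nat j)) with (m := j); [lia | lia | lia |].
  exists u, v, w, z. exact Hz.
- assert (Od : Z.odd m = true) by (rewrite <- Z.negb_even, Ev; reflexivity).
  destruct (odd_step p m a b c d ltac:(lia) Od H Hpr) as [r [Hr Hs]].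
  apply (IH (Z.to_nat r)) with (m := r); [lia | lia | lia | exact Hs].
Qed.

Lemma four_sq_prime (p : Z) : 2 < p -> (forall d, 1 < d < p -> ~ (d | p)) ->
  (exists x y, 0 <= x /\ 0 <= y /\ 2 * x < p /\ 2 * y < p /\ (p | x*x + y*y + 1)) ->
  exists a b c d, p = s4 a b c d.
Proof.
intros Hp Hpr [x [y [Hx [Hy [Hx2 [Hy2 [k Hk]]]]]]].
assert (Hk1 : 1 <= k) by nia.
assert (Bx : 4 * (x * x) <= (p - 1) * (p - 1)) by nia.
assert (By : 4 * (y * y) <= (p - 1) * (p - 1)) by nia.
assert (Hkp : k < p) by nia.
apply (descent p Hp Hpr (Z.to_nat k) k ltac:(lia) ltac:(lia)).
exists x, y, 1, 0. unfold s4. rewrite <- Hk. ring.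
Qed.

Lemma four_sq_prime_nat (p : nat) : (2 < p)%nat ->
  (forall d : nat, (1 < d < p)%nat -> ~ Nat.divide d p) ->
  (exists x y : nat, (2 * x < p)%nat /\ (2 * y < p)%nat /\ Nat.divide p (x*x + y*y + 1)) ->
  exists a b c d : nat, p = (a*a + b*b + c*c + d*d)%nat.
Proof.
intros Hp Hpr [x [y [Hx [Hy [k Hk]]]]].
destruct (four_sq_prime (Z.of_nat p)) as [a [b [c [d H]]]].
- lia.
- intros d Hd [q Hq].
  assert (Hq0 : 0 <= q) by nia.
  apply (Hpr (Z.to_nat d)); [lia |].
  exists (Z.to_nat q). apply Nat2Z.inj. rewrite Nat2Z.inj_mul, !Z2Nat.id; lia.
- exists (Z.of_nat x), (Z.of_nat y). split; [lia|]. split; [lia|]. split; [lia|]. split; [lia|].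
  exists (Z.of_nat k). apply (f_equal Z.of_nat) in Hk.
  rewrite !Nat2Z.inj_add, !Nat2Z.inj_mul in Hk. simpl in Hk. lia.
- exists (Z.abs_nat a), (Z.abs_nat b), (Z.abs_nat c), (Z.abs_nat d).
  apply Nat2Z.inj. rewrite !Nat2Z.inj_add, !Nat2Z.inj_mul, !Nat2Z.inj_abs_nat, H.
  unfold s4. rewrite <- !Z.abs_mul. rewrite !Z.abs_eq by nia. reflexivity.
Qed.


Local Close Scope Z_scope.
From HB Require Import structures.
From mathcomp Require Import all_boot all_order all_algebra ring zify.
Set Implicit Arguments. Unset Strict Implicit. Unset Printing Implicit Defensive.
Import Order.TTheory GRing.Theory Num.Theory.
Local Open Scope ring_scope.

Definition negf (r : seq int) (i j : nat) : int :=
  if (i <= j)%N then r`_(j - i)%N else - r`_(14 + j - i)%N.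
Definition entD (i j : nat) : int :=
  if (i < 14)%N then (if (j < 14)%N then negf rA i j else negf rB i (j - 14)%N)
  else (if (j < 14)%N then - negf rB j (i - 14)%N else negf rA (j - 14)%N (i - 14)%N).
Definition blk (f11 f12 f21 f22 : nat -> nat -> int) (h : nat) (i j : nat) : int :=
  if (i < h)%N then (if (j < h)%N then f11 i j else f12 i (j - h)%N)
  else (if (j < h)%N then f21 (i - h)%N j else f22 (i - h)%N (j - h)%N).
Definition idf (i j : nat) : int := if i == j then 1 else 0.
Definition zf (i j : nat) : int := 0.
Definition oppf (f : nat -> nat -> int) i j : int := - f i j.
Definition P7 (i j : nat) : int :=
  if j == (i + 7)%N then 1 else if i == (j + 7)%N then -1 else 0.
Definition cf (i j : nat) : int :=
  if i == 0%N then (if j == 0%N then 1 else 0) else if (i + j == 14)%N then -1 else 0.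
Definition P7c (i j : nat) : int :=
  if (i <= 7)%N then (if (i + j == 7)%N then -1 else 0) else (if (i + j == 21)%N then 1 else 0).
Definition mu1 := blk P7 zf zf P7 14.
Definition mu2 := blk zf cf (oppf cf) zf 14.
Definition mu3 := blk zf P7c (oppf P7c) zf 14.
Definition ent (k : nat) : nat -> nat -> int :=
  match k with
  | 0 => idf
  | 1 => blk zf mu1 mu1 zf 28
  | 2 => blk zf mu2 mu2 zf 28
  | 3 => blk zf mu3 mu3 zf 28
  | 4 => blk entD idf (oppf idf) (oppf entD) 28
  | _ => blk zf idf (oppf idf) zf 28
  end.
Definition rowsOf k : seq (seq int) := mkseq (fun i => mkseq (ent k i) 56) 56.
Definition dotl (s t : seq int) : int := foldr (fun p acc => p.1 * p.2 + acc) 0 (zip s t).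
Definition gval (k l : nat) : int :=
  if k == l then (if k == 4%N then 60 else 2)
  else if ((k == 4%N) && (l == 5%N)) || ((k == 5%N) && (l == 4%N)) then 2 else 0.
Definition checkR (R : seq (seq (seq int))) : bool :=
  all (fun k => all (fun l => all (fun i => all (fun j =>
    dotl (nth [::] (nth [::] R k) i) (nth [::] (nth [::] R l) j)
    + dotl (nth [::] (nth [::] R l) i) (nth [::] (nth [::] R k) j)
    == (if i == j then gval k l else 0)) (iota 0 56)) (iota 0 56)) (iota k (6 - k))) (iota 0 6).
Lemma check1_ok : checkR (map rowsOf (iota 0 6)). Proof. vm_compute. reflexivity. Qed.

Definition check2 : bool :=
  all (fun i => all (fun j =>
    modz (ent 4 i (28 + j) - foldr (fun r acc => ent 4 i r * entD r j + acc) 0 (iota 0 28)) 5 == 0)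
    (iota 0 28)) (iota 0 56).
Lemma check2_ok : check2. Proof. vm_compute. reflexivity. Qed.

Notation N := ((14 + 14) + (14 + 14))%N.
Definition Mmx (k : nat) : 'M[int]_N := \matrix_(i, j) ent k i j.

Lemma dotl_map (f g : nat -> int) m n :
  dotl (map f (iota m n)) (map g (iota m n)) = \sum_(r <- iota m n) f r * g r.
Proof.
elim: n m => [|n IH] m; first by rewrite big_nil.
by rewrite /= big_cons -IH.
Qed.

Lemma MMt k l (i j : 'I_N) :
  (Mmx k *m (Mmx l)^T) i j = dotl (nth [::] (rowsOf k) i) (nth [::] (rowsOf l) j).
Proof.
rewrite /rowsOf !nth_mkseq //= /mkseq dotl_map mxE.
rewrite -[iota 0 _]/(index_iota 0 56) big_mkord.
by apply: eq_bigr => r _; rewrite !mxE.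
Qed.

Lemma gval_sym k l : (k < 6)%N -> (l < 6)%N -> gval k l = gval l k.
Proof.
by case: k => [|[|[|[|[|[|k]]]]]] //; case: l => [|[|[|[|[|[|l]]]]]].
Qed.

Lemma gram_rel k l : (k < 6)%N -> (l < 6)%N ->
  Mmx k *m (Mmx l)^T + Mmx l *m (Mmx k)^T = (gval k l)%:M.
Proof.
wlog kl : k l / (k <= l)%N.
  move=> W hk hl; case: (leqP k l) => h; first exact: W.
  by rewrite addrC gval_sym //; apply: W => //; apply: ltnW.
move=> hk hl; apply/matrixP => i j.
have := check1_ok; rewrite /checkR => /allP /(_ k).
rewrite mem_iota add0n => /(_ hk) /allP /(_ l).
rewrite mem_iota subnKC ?kl; last by apply: ltnW.
move=> /(_ hl).
move=> /allP /(_ i); rewrite mem_iota add0n => /(_ (ltn_ord i)).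
move=> /allP /(_ j); rewrite mem_iota add0n => /(_ (ltn_ord j)) /eqP.
rewrite !(nth_map 0%N) ?size_iota // !nth_iota // !add0n => H.
rewrite [X in X = _]mxE !MMt /rowsOf !nth_mkseq // H mxE.
have -> : (i == j) = (nat_of_ord i == nat_of_ord j) by []. by case: (_ == _).
Qed.

Lemma D28E (i j : 'I_(14 + 14)) : D28 i j = entD i j.
Proof.
rewrite /D28 /entD !mxE.
case: splitP => i' Ei; rewrite !mxE; case: splitP => j' Ej; rewrite !mxE Ei Ej /=;
  rewrite ?ltn_ord ?(addKn, ltnNge, leq_addr) //=.
Qed.

Lemma red5_5 : red 5 5 = 0.
Proof. by apply/val_inj. Qed.

Lemma rho_red (v : int) : v - rho (red 5 v) \in dvdz 5.
Proof.
have Hv := divz_eq v 5.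
have Hr : red 5 v = red 5 (modz v 5).
  by rewrite {1}Hv /red intrD intrM -/(red 5 5) red5_5 mulr0 add0r.
rewrite Hr.
have H0 : 0 <= modz v 5 by apply: modz_ge0.
have H5 : modz v 5 < 5 by apply: ltz_pmod.
move: Hv H0 H5; case: (modz v 5) => [n|n] Hv H0 H5 //.
have : (n < 5)%N by [].
move=> hn.
have E : rho (red 5 (Posz n)) = Posz n.
  by case: n hn {Hv H0 H5} => [|[|[|[|[|]]]]].
rewrite E {1}Hv addrK; exact: dvdz_mull (dvdzz 5).
Qed.

Definition condL (y : 'rV[int]_N) : Prop :=
  forall j, red 5 (rsubmx y 0 j) = red 5 ((lsubmx y *m D28) 0 j).

Lemma condL_inAk y : condL y -> inAk C5D28 y.
Proof.
move=> Hy; exists (map_mx (red 5) y); split.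
  exists (map_mx (red 5) (lsubmx y)).
  rewrite /gen5 mul_mx_row mulmx1 -{1}[y]hsubmxK map_row_mx; congr row_mx.
  apply/matrixP => i j; rewrite (ord1 i) -map_mxM !mxE. by move: (Hy j); rewrite !mxE.
exists (map_mx (fun v => divz (v - rho (red 5 v)) 5) y).
apply/matrixP => i j; rewrite !mxE.
by rewrite mulrC divzK ?rho_red // addrC subrK.
Qed.

Lemma condL_add y1 y2 : condL y1 -> condL y2 -> condL (y1 + y2).
Proof.
move=> H1 H2 j; move: (H1 j) (H2 j).
by rewrite !linearD /= mulmxDl !mxE /red !intrD => -> ->.
Qed.

Lemma condL_scale (a : int) y : condL y -> condL (a *: y).
Proof.
move=> H j; move: (H j).
by rewrite !linearZ /= -scalemxAl !mxE /red !intrM => ->.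
Qed.

Lemma condL_5 (y : 'rV[int]_N) : condL (5%:Z *: y).
Proof.
move=> j; rewrite !linearZ /= -scalemxAl !mxE /red !intrM.
have h : (5%:~R : 'Z_5) = 0 := red5_5.
rewrite h mul0r; symmetry; exact: mul0r.
Qed.

Lemma condL_0 : condL 0.
Proof. by move=> j; rewrite !linear0 mul0mx !mxE. Qed.

Lemma condL_sum (I : Type) (r : seq I) (F : I -> 'rV[int]_N) :
  (forall i, condL (F i)) -> condL (\sum_(i <- r) F i).
Proof.
move=> H; elim: r => [|x r IH]; first by rewrite big_nil; exact: condL_0.
by rewrite big_cons; apply: condL_add.
Qed.

Lemma foldr_iota (f : nat -> int) m n :
  foldr (fun r acc => f r + acc) 0 (iota m n) = \sum_(r <- iota m n) f r.
Proof. by elim: n m => [|n IH] m; [rewrite big_nil | rewrite /= big_cons IH]. Qed.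

Lemma red_eq (a b : int) : modz (a - b) 5 = 0 -> red 5 a = red 5 b.
Proof.
move=> H; apply/eqP; rewrite -subr_eq0 /red -intrB.
rewrite (divz_eq (a - b) 5) H addr0 intrM.
have h : (5%:~R : 'Z_5) = 0 := red5_5.
by rewrite h mulr0.
Qed.

Lemma condG (i : 'I_N) : condL (row i (Mmx 4)).
Proof.
move=> j.
have := check2_ok; rewrite /check2 => /allP /(_ i); rewrite mem_iota add0n => /(_ (ltn_ord i)).
move=> /allP /(_ j); rewrite mem_iota add0n => /(_ (ltn_ord j)) /eqP H.
apply: red_eq; rewrite -H foldr_iota; congr (modz (_ - _) 5).
  by rewrite !mxE.
rewrite !mxE -[iota 0 _]/(index_iota 0 28) big_mkord.
by apply: eq_bigr => r _; rewrite -D28E !mxE.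
Qed.

Definition Fm (a : 'I_6 -> int) : 'M[int]_N := \sum_(k < 6) a k *: Mmx k.

Lemma FFt (a : 'I_6 -> int) :
  Fm a *m (Fm a)^T = \sum_(k < 6) \sum_(l < 6) (a k * a l) *: (Mmx k *m (Mmx l)^T).
Proof.
rewrite /Fm linear_sum /= mulmx_suml; apply: eq_bigr => k _.
rewrite mulmx_sumr; apply: eq_bigr => l _.
by rewrite linearZ /= -scalemxAl -scalemxAr scalerA.
Qed.

Lemma gram2 (a : 'I_6 -> int) :
  2%:Z *: (Fm a *m (Fm a)^T) = (\sum_(k < 6) \sum_(l < 6) a k * a l * gval k l)%:M.
Proof.
rewrite FFt (_ : 2%:Z = 1 + 1) // scalerDl scale1r.
rewrite [X in _ + X]exchange_big /= -big_split /=.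
rewrite raddf_sum /=; apply: eq_bigr => k _.
rewrite -big_split raddf_sum /=; apply: eq_bigr => l _.
rewrite [a l * a k]mulrC -scalerDr gram_rel //.
by rewrite scale_scalar_mx.
Qed.

Definition coef (x0 x1 x2 x3 b c : int) (k : 'I_6) : int :=
  nth 0 [:: 5 * x0; 5 * x1; 5 * x2; 5 * x3; b; 5 * c] k.

Lemma sumg (x0 x1 x2 x3 b c : int) :
  \sum_(k < 6) \sum_(l < 6) coef x0 x1 x2 x3 b c k * coef x0 x1 x2 x3 b c l * gval k l
  = 2 * (5 * (5 * (x0 ^+ 2 + x1 ^+ 2 + x2 ^+ 2 + x3 ^+ 2) + 6 * b ^+ 2 + 2 * b * c + 5 * c ^+ 2)).
Proof.
rewrite !big_ord_recr !big_ord0 /=.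
rewrite /coef /gval /=.
ring.
Qed.

Lemma frame_of (t : nat) (x0 x1 x2 x3 b c : int) :
  t%:Z = 5 * (x0 ^+ 2 + x1 ^+ 2 + x2 ^+ 2 + x3 ^+ 2) + 6 * b ^+ 2 + 2 * b * c + 5 * c ^+ 2 ->
  has_frame C5D28 t.
Proof.
move=> Ht; set a := coef x0 x1 x2 x3 b c.
exists (fun i => row i (Fm a)); split.
  move=> i; apply: condL_inAk.
  rewrite /Fm linear_sum /=; apply: condL_sum => k.
  rewrite linearZ /=.
  case: k => [[|[|[|[|[|[|k]]]]]] hk] //.
  - by rewrite /a /coef /= -scalerA; apply: condL_5.
  - by rewrite /a /coef /= -scalerA; apply: condL_5.
  - by rewrite /a /coef /= -scalerA; apply: condL_5.
  - by rewrite /a /coef /= -scalerA; apply: condL_5.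
  - by apply: condL_scale; apply: condG.
  - by rewrite /a /coef /= -scalerA; apply: condL_5.
move=> i j.
have G2 := gram2 a; rewrite sumg -Ht in G2.
have E : dotZ (row i (Fm a)) (row j (Fm a)) = (Fm a *m (Fm a)^T) i j.
  by rewrite /dotZ !mxE; apply: eq_bigr => r _; rewrite !mxE.
rewrite E.
have := congr1 (fun M : 'M[int]_N => M i j) G2 => /=.
rewrite !mxE => H2.
apply: (mulfI (x := 2%:Z)) => //.
rewrite H2 PoszM.
by case: (i == j); rewrite ?mulr0 ?mulr1n ?mulr0n.
Qed.

Lemma sq_inj (p x x' : nat) : prime p -> odd p -> (x <= p./2)%N -> (x' <= p./2)%N ->
  (x * x == x' * x' %[mod p]) -> x = x'.
Proof.
move=> pr op.
wlog le : x x' / (x' <= x)%N.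
  move=> W hx hx' E; case: (leqP x' x) => h; first exact: W.
  by apply/esym/W => //; [exact: ltnW | rewrite eq_sym].
move=> hx hx'; rewrite eqn_mod_dvd ?leq_mul // !mulnn subn_sqr Euclid_dvdM //.
have hp : p = (p./2).*2.+1 by rewrite -{1}(odd_double_half p) op.
rewrite -addnn in hp.
case/orP => D.
- case: (posnP (x - x')) => [z|pos]; first lia.
  have := dvdn_leq pos D; lia.
- case: (posnP (x + x')) => [z|pos]; first lia.
  have := dvdn_leq pos D; lia.
Qed.

Lemma exists_sq (p : nat) : prime p -> odd p ->
  exists x y, (2 * x < p)%N /\ (2 * y < p)%N /\ (p %| x * x + y * y + 1)%N.
Proof.
move=> pr op.
have p0 : (0 < p)%N := prime_gt0 pr.
have hp : p = (p./2).*2.+1 by rewrite -{1}(odd_double_half p) op.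
rewrite -addnn in hp.
pose h := p./2.
have fl (x : 'I_h.+1) : (x * x %% p < p)%N by rewrite ltn_mod.
have fr (y : 'I_h.+1) : (p.-1 - y * y %% p < p)%N.
  by move: (y * y %% p)%N => a; lia.
pose f (u : ('I_h.+1 + 'I_h.+1)%type) : 'I_p :=
  match u with inl x => Ordinal (fl x) | inr y => Ordinal (fr y) end.
have : ~~ injectiveb f.
  apply/negP => /injectiveP /leq_card; rewrite card_sum !card_ord; lia.
case/injectivePn => u [v] nuv /(congr1 val) /= E.
have modlt a : (a %% p <= p.-1)%N by rewrite -ltnS prednK // ltn_mod.
case: u v nuv E => [x|y] [x'|y'] nuv E.
- exfalso; move/eqP: nuv; apply; congr inl; apply/val_inj.
  have E' : (x * x %% p = x' * x' %% p)%N := E.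
  by apply: (sq_inj pr op) => //; [rewrite -ltnS ltn_ord | rewrite -ltnS ltn_ord | apply/eqP].
- have hx := ltn_ord x; have hy := ltn_ord y'; rewrite /h in hx hy.
  have b1 : (2 * x < p)%N by rewrite [X in (_ < X)%N]hp; move: hx; move: (nat_of_ord x) => X; lia.
  have b2 : (2 * y' < p)%N by rewrite [X in (_ < X)%N]hp; move: hy; move: (nat_of_ord y') => X; lia.
  exists x, y'; split; [exact b1 | split; [exact b2|]].
  have H1 := modlt (y' * y')%N.
  have E' : (x * x %% p = p.-1 - y' * y' %% p)%N := E.
  have H : (x * x %% p + y' * y' %% p + 1 = p)%N.
    by move: E' H1; move: (x * x %% p)%N (y' * y' %% p)%N => A B; lia.
  rewrite (divn_eq (x * x)%N p) (divn_eq (y' * y')%N p).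
  have -> : (x * x %/ p * p + x * x %% p + (y' * y' %/ p * p + y' * y' %% p) + 1
            = (x * x %/ p + y' * y' %/ p + 1) * p)%N.
    move: H; move: (x * x %/ p)%N (x * x %% p)%N (y' * y' %/ p)%N (y' * y' %% p)%N => A a B b Hab.
    by rewrite !mulnDl mul1n -{3}Hab; nia.
  exact: dvdn_mull.
- have hx := ltn_ord x'; have hy := ltn_ord y; rewrite /h in hx hy.
  have b1 : (2 * x' < p)%N by rewrite [X in (_ < X)%N]hp; move: hx; move: (nat_of_ord x') => X; lia.
  have b2 : (2 * y < p)%N by rewrite [X in (_ < X)%N]hp; move: hy; move: (nat_of_ord y) => X; lia.
  exists x', y; split; [exact b1 | split; [exact b2|]].
  have H1 := modlt (y * y)%N.
  have E' : (p.-1 - y * y %% p = x' * x' %% p)%N := E.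
  have H : (x' * x' %% p + y * y %% p + 1 = p)%N.
    by move: E' H1; move: (x' * x' %% p)%N (y * y %% p)%N => A B; lia.
  rewrite (divn_eq (x' * x')%N p) (divn_eq (y * y)%N p).
  have -> : (x' * x' %/ p * p + x' * x' %% p + (y * y %/ p * p + y * y %% p) + 1
            = (x' * x' %/ p + y * y %/ p + 1) * p)%N.
    move: H; move: (x' * x' %/ p)%N (x' * x' %% p)%N (y * y %/ p)%N (y * y %% p)%N => A a B b Hab.
    by rewrite !mulnDl mul1n -{3}Hab; nia.
  exact: dvdn_mull.
- exfalso; move/eqP: nuv; apply; congr inr; apply/val_inj.
  have H1 := modlt (y * y)%N; have H2 := modlt (y' * y')%N.
  have E'' : (p.-1 - y * y %% p = p.-1 - y' * y' %% p)%N := E.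
  have E' : (y * y %% p = y' * y' %% p)%N.
    by move: E'' H1 H2; move: (y * y %% p)%N (y' * y' %% p)%N => A B; lia.
  by apply: (sq_inj pr op) => //; [rewrite -ltnS ltn_ord | rewrite -ltnS ltn_ord | apply/eqP].
Qed.

Lemma four_sq_prime_mc (p : nat) : prime p ->
  exists x0 x1 x2 x3 : int, p%:Z = x0 ^+ 2 + x1 ^+ 2 + x2 ^+ 2 + x3 ^+ 2.
Proof.
move=> pr.
have [->|op] := even_prime pr.
  by exists 1, 1, 0, 0.
have p2 : (2 < p)%N.
  have := prime_gt1 pr; case: p {pr} op => [|[|[|p]]] //.
have [a [b [c [d E]]]] : exists a b c d : nat, p = (a*a + b*b + c*c + d*d)%coq_nat.
  apply: four_sq_prime_nat.
  - lia.
  - move=> dd [h1 h2] Hd.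
    have : (dd %| p)%N by apply/dvdnP; exact: Hd.
    case/primeP: pr => _ /(_ dd) H /H /orP [] /eqP E; move: h1 h2; rewrite E; lia.
  - have [x [y [hx [hy hd]]]] := exists_sq pr op.
    exists x, y; split; [lia | split; [lia |]].
    by case/dvdnP: hd => k hk; exists k.
have E' : p = (a * a + b * b + c * c + d * d)%N := E.
exists a%:Z, b%:Z, c%:Z, d%:Z.
by rewrite E' !PoszD !PoszM !expr2.
Qed.

Lemma four_sq (n : nat) :
  exists x0 x1 x2 x3 : int, n%:Z = x0 ^+ 2 + x1 ^+ 2 + x2 ^+ 2 + x3 ^+ 2.
Proof.
elim/ltn_ind: n => n IH.
case: (leqP n 1) => hn.
  case: n hn {IH} => [|[|]] // _; [by exists 0, 0, 0, 0 | by exists 1, 0, 0, 0].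
have pr := pdiv_prime hn.
have dv := pdiv_dvd n.
set p := pdiv n in pr dv.
have p1 := prime_gt1 pr.
have En : n = (n %/ p * p)%N by rewrite divnK.
have lt : (n %/ p < n)%N by rewrite ltn_Pdiv //; lia.
have [a1 [a2 [a3 [a4 Ha]]]] := IH _ lt.
have [b1 [b2 [b3 [b4 Hb]]]] := four_sq_prime_mc pr.
exists (a1*b1 + a2*b2 + a3*b3 + a4*b4), (a1*b2 - a2*b1 + a3*b4 - a4*b3),
       (a1*b3 - a3*b1 + a4*b2 - a2*b4), (a1*b4 - a4*b1 + a2*b3 - a3*b2).
rewrite En PoszM Ha Hb; ring.
Qed.

Lemma key (t m q : nat) (b c : int) : t = (5 * m + q)%N ->
  q%:Z = 6 * b ^+ 2 + 2 * b * c + 5 * c ^+ 2 -> has_frame C5D28 t.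
Proof.
move=> Ht Hq.
have [x0 [x1 [x2 [x3 Hm]]]] := four_sq m.
apply: (frame_of (x0 := x0) (x1 := x1) (x2 := x2) (x3 := x3) (b := b) (c := c)).
rewrite Ht PoszD PoszM Hq -Hm; ring.
Qed.

Theorem lemma6p1 (t : nat) :
  (5 <= t)%N ->
  ~ (exists m1 m2 m3 m4 m5 : nat,
        t = (2 ^ m1 * 3 ^ m2 * 7 ^ m3 * 17 ^ m4 * 23 ^ m5)%N) ->
  has_frame C5D28 t.
Proof.
move=> t5 nex.
have : (t %% 5 = 0 \/ t %% 5 = 1 \/ t %% 5 = 2 \/ t %% 5 = 3 \/ t %% 5 = 4)%N by lia.
case=> [h|[h|[h|[h|h]]]].
- by apply: (key (m := t %/ 5) (q := 0) (b := 0) (c := 0)); [lia | ring].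
- by apply: (key (m := t %/ 5 - 1) (q := 6) (b := 1) (c := 0)); [lia | ring].
- case: (leqP 4 (t %/ 5)) => h4.
    by apply: (key (m := t %/ 5 - 4) (q := 22) (b := 1) (c := -2)); [lia | ring].
  exfalso; apply: nex.
  have : (t = 7 \/ t = 12 \/ t = 17)%N by lia.
  case=> [->|[->|->]].
  + by exists 0%N, 0%N, 1%N, 0%N, 0%N.
  + by exists 2%N, 1%N, 0%N, 0%N, 0%N.
  + by exists 0%N, 0%N, 0%N, 1%N, 0%N.
- case: (leqP 2 (t %/ 5)) => h2.
    by apply: (key (m := t %/ 5 - 2) (q := 13) (b := 1) (c := 1)); [lia | ring].
  exfalso; apply: nex.
  have -> : t = 8%N by lia.
  by exists 3%N, 0%N, 0%N, 0%N, 0%N.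
- by apply: (key (m := t %/ 5 - 1) (q := 9) (b := 1) (c := -1)); [lia | ring].
Qed.
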